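(* $\delta(2)\le 5$; that is, $2\in E_5$: every multiset of five decimal digits can be condensed into $2$.
   Context: For a finite nonempty multiset $S$ of real numbers, $V(S)$ is the smallest set of real numbers such that: (1) if $|S|=1$ then $S\subseteq V(S)$; (2) if $|S|\ge 2$, then for all nonempty multisets $A,B$ with $A+B=S$ (multiplicities add) and all $a\in V(A)$, $b\in V(B)$, each of $a+b,\ a-b,\ b-a,\ ab,\ a/b,\ b/a,\ a^b,\ b^a$ lies in $V(S)$ whenever it is a well-defined real number; (3) if $a\in V(S)$ is a nonnegative integer then $a!\in V(S)$ (with $0!=1$). Let $D=\{0,\dots,9\}$; for $k\ge1$, $E_k$ is the intersection of $V(S)$ over all multisets $S$ of size $k$ with all elements in $D$. For a number $n$, $\delta(n)=\min\{k\ge1: n\in E_k\}$. *)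

(* Defs.v *)
From Stdlib Require Import Reals List Permutation ZArith Arith.
Import ListNotations.
Open Scope R_scope.

(* [pow_val x y z] : the real power x^y is a well-defined real number and equals z. *)
Definition pow_val (x y z : R) : Prop :=
  (0 < x /\ z = Rpower x y) \/
  (x = 0 /\ 0 < y /\ z = 0) \/
  (x < 0 /\ exists k : Z, y = IZR k /\ z = powerRZ x k).

Definition combine (a b c : R) : Prop :=
  c = a + b \/ c = a - b \/ c = b - a \/ c = a * b \/
  (b <> 0 /\ c = a / b) \/ (a <> 0 /\ c = b / a) \/
  pow_val a b c \/ pow_val b a c.

(* Multisets of reals are represented by lists, up to permutation.
   [V S x] means x ∈ V(S); V is the least such predicate. *)
Inductive V : list R -> R -> Prop :=
| V_single : forall x : R, V [x] x
| V_comb : forall (S A B : list R) (a b c : R),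
    A <> [] -> B <> [] -> Permutation (A ++ B) S ->
    V A a -> V B b -> combine a b c -> V S c
| V_fact : forall (S : list R) (n : nat),
    V S (INR n) -> V S (INR (fact n)).

Definition E (k : nat) (x : R) : Prop :=
  forall l : list nat, length l = k -> Forall (fun d => (d <= 9)%nat) l ->
    V (map INR l) x.

(* Main.v *)
Require Import Defs.
From Stdlib Require Import Reals List Permutation ZArith Arith Lra Lia Bool.
Import ListNotations.
Open Scope R_scope.

Lemma V_nonempty : forall S x, V S x -> S <> [].
Proof.
  intros S x H; induction H; try congruence.
  intro E; subst. apply Permutation_sym in H1. apply Permutation_nil in H1.
  destruct A; simpl in H1; congruence.
Qed.

Lemma V_perm : forall S x, V S x -> forall S', Permutation S S' -> V S' x.
Proof.
  intros S x H; induction H; intros S' HP.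
  - apply Permutation_length_1_inv in HP. subst. apply V_single.
  - apply (V_comb S' A B a b c); auto. eapply perm_trans; eauto.
  - apply V_fact. auto.
Qed.

Lemma V_app : forall A B a b c, V A a -> V B b -> Defs.combine a b c -> V (A ++ B) c.
Proof.
  intros. apply (V_comb (A ++ B) A B a b c); eauto using V_nonempty, Permutation_refl.
Qed.

Lemma V_exists : forall l, l <> [] -> exists r, V l r.
Proof.
  induction l; intros H; [congruence|].
  destruct l as [|b l].
  - exists a. apply V_single.
  - destruct IHl as [r Hr]; [congruence|].
    exists (a + r). change (a :: b :: l) with ([a] ++ (b :: l)).
    eapply V_app; [apply V_single | eauto | left; reflexivity].
Qed.

Lemma one_extend : forall A B, V A 1 -> V (A ++ B) 1.
Proof.
  intros A B HA. destruct B as [|b B].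
  - rewrite app_nil_r; auto.
  - destruct (V_exists (b :: B)) as [r Hr]; [congruence|].
    eapply V_app; eauto. right; right; right; right; right; right; left.
    left. split; [lra|]. unfold Rpower. rewrite ln_1, Rmult_0_r, exp_0. reflexivity.
Qed.

Definition one1 (x : nat) : bool := Nat.leb x 1.
Definition two1 (x : nat) : bool := Nat.eqb x 2.
Definition one2 (x y : nat) : bool :=
  Nat.eqb x y || Nat.eqb y (S x) || Nat.eqb x (S y).
Definition two2 (x y : nat) : bool :=
  Nat.eqb y (x + 2) || Nat.eqb x (y + 2) ||
  (Nat.ltb 0 x && Nat.eqb y (2 * x)) || (Nat.ltb 0 y && Nat.eqb x (2 * y)).

Lemma one1_ok : forall x, one1 x = true -> V [INR x] 1.
Proof.
  intros x H. unfold one1 in H. apply Nat.leb_le in H.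
  destruct x as [|[|x]]; try lia.
  - change 1 with (INR (fact 0)). apply V_fact. apply V_single.
  - simpl. apply V_single.
Qed.

Lemma two1_ok : forall x, two1 x = true -> V [INR x] 2.
Proof.
  intros x H. unfold two1 in H. apply Nat.eqb_eq in H. subst.
  replace 2 with (INR 2) by (simpl; lra). apply V_single.
Qed.

Lemma one2_ok : forall x y, one2 x y = true -> V [INR x; INR y] 1.
Proof.
  intros x y H. unfold one2 in H. repeat rewrite orb_true_iff in H.
  change [INR x; INR y] with ([INR x] ++ [INR y]).
  destruct H as [[H|H]|H]; apply Nat.eqb_eq in H; subst.
  - change 1 with (INR (fact 0)). apply V_fact.
    eapply V_app; [apply V_single|apply V_single|]. right; left. simpl; ring.
  - eapply V_app; [apply V_single|apply V_single|]. right; right; left.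
    rewrite S_INR; ring.
  - eapply V_app; [apply V_single|apply V_single|]. right; left.
    rewrite S_INR; ring.
Qed.

Lemma two2_ok : forall x y, two2 x y = true -> V [INR x; INR y] 2.
Proof.
  intros x y H. unfold two2 in H. repeat rewrite orb_true_iff in H.
  change [INR x; INR y] with ([INR x] ++ [INR y]).
  destruct H as [[[H|H]|H]|H].
  - apply Nat.eqb_eq in H; subst.
    eapply V_app; [apply V_single|apply V_single|]. right; right; left.
    rewrite plus_INR; simpl; ring.
  - apply Nat.eqb_eq in H; subst.
    eapply V_app; [apply V_single|apply V_single|]. right; left.
    rewrite plus_INR; simpl; ring.
  - apply andb_true_iff in H; destruct H as [H1 H2].
    apply Nat.ltb_lt in H1. apply Nat.eqb_eq in H2; subst.
    assert (INR x <> 0) by (apply not_0_INR; lia).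
    eapply V_app; [apply V_single|apply V_single|]. right; right; right; right; right; left.
    split; auto. rewrite mult_INR; simpl; field; auto.
  - apply andb_true_iff in H; destruct H as [H1 H2].
    apply Nat.ltb_lt in H1. apply Nat.eqb_eq in H2; subst.
    assert (INR y <> 0) by (apply not_0_INR; lia).
    eapply V_app; [apply V_single|apply V_single|]. right; right; right; right; left.
    split; auto. rewrite mult_INR; simpl; field; auto.
Qed.

Fixpoint picks (l : list nat) : list (nat * list nat) :=
  match l with
  | [] => []
  | x :: r => (x, r) :: map (fun p => (fst p, x :: snd p)) (picks r)
  end.

Lemma picks_perm : forall l x r, In (x, r) (picks l) -> Permutation l (x :: r).
Proof.
  induction l; simpl; intros x r H; [contradiction|].
  destruct H as [H|H].
  - inversion H; subst. apply Permutation_refl.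
  - apply in_map_iff in H. destruct H as [[y s] [E Hin]]. simpl in E. inversion E; subst.
    apply IHl in Hin. eapply perm_trans; [apply perm_skip; exact Hin|]. apply perm_swap.
Qed.

Definition has1 (r : list nat) : bool :=
  existsb (fun p => one1 (fst p) ||
     existsb (fun q => one2 (fst p) (fst q)) (picks (snd p))) (picks r).

Lemma Vmap_perm : forall l l' v, Permutation l l' -> V (map INR l') v -> V (map INR l) v.
Proof.
  intros. eapply V_perm; eauto. apply Permutation_map. apply Permutation_sym; auto.
Qed.

Lemma has1_ok : forall r, has1 r = true -> V (map INR r) 1.
Proof.
  intros r H. unfold has1 in H. apply existsb_exists in H.
  destruct H as [[x r1] [Hin H]]. simpl in H. apply picks_perm in Hin.
  eapply Vmap_perm; [exact Hin|].
  apply orb_true_iff in H. destruct H as [H|H].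
  - simpl. change (INR x :: map INR r1) with ([INR x] ++ map INR r1).
    apply one_extend. apply one1_ok; auto.
  - apply existsb_exists in H. destruct H as [[y r2] [Hin2 H]]. simpl in H.
    apply picks_perm in Hin2.
    apply Vmap_perm with (l' := x :: y :: r2); [apply perm_skip; auto|].
    simpl. change (INR x :: INR y :: map INR r2) with ([INR x; INR y] ++ map INR r2).
    apply one_extend. apply one2_ok; auto.
Qed.

Lemma final : forall g r v, V g v -> (v = 1 \/ v = 2) -> V r 1 -> V (g ++ r) 2.
Proof.
  intros g r v Hg Hv Hr. eapply V_app; eauto.
  destruct Hv; subst; [left; ring | right; right; right; left; ring].
Qed.

Definition check (l : list nat) : bool :=
  existsb (fun p =>
    ((one1 (fst p) || two1 (fst p)) && has1 (snd p)) ||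
    existsb (fun q => (one2 (fst p) (fst q) || two2 (fst p) (fst q)) && has1 (snd q))
       (picks (snd p))) (picks l).

Lemma check_ok : forall l, check l = true -> V (map INR l) 2.
Proof.
  intros l H. unfold check in H. apply existsb_exists in H.
  destruct H as [[x r1] [Hin H]]. simpl in H. apply picks_perm in Hin.
  eapply Vmap_perm; [exact Hin|].
  apply orb_true_iff in H. destruct H as [H|H].
  - apply andb_true_iff in H. destruct H as [H1 H2].
    simpl. change (INR x :: map INR r1) with ([INR x] ++ map INR r1).
    apply orb_true_iff in H1.
    destruct H1 as [H1|H1].
    + apply final with (v := 1); auto using has1_ok. apply one1_ok; auto.
    + apply final with (v := 2); auto using has1_ok. apply two1_ok; auto.
  - apply existsb_exists in H. destruct H as [[y r2] [Hin2 H]]. simpl in H.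
    apply picks_perm in Hin2.
    apply Vmap_perm with (l' := x :: y :: r2); [apply perm_skip; auto|].
    simpl. change (INR x :: INR y :: map INR r2) with ([INR x; INR y] ++ map INR r2).
    apply andb_true_iff in H. destruct H as [H1 H2].
    apply orb_true_iff in H1.
    destruct H1 as [H1|H1].
    + apply final with (v := 1); auto using has1_ok. apply one2_ok; auto.
    + apply final with (v := 2); auto using has1_ok. apply two2_ok; auto.
Qed.

Fixpoint allLists (n : nat) : list (list nat) :=
  match n with
  | O => [[]]
  | S n' => flat_map (fun d => map (cons d) (allLists n')) (seq 0 10)
  end.

Lemma allLists_in : forall l, Forall (fun d => (d <= 9)%nat) l -> In l (allLists (length l)).
Proof.
  induction l; intros H; [simpl; auto|]. change (length (a :: l)) with (S (length l)). unfold allLists; fold allLists.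
  inversion H; subst. apply in_flat_map. exists a. split.
  - apply in_seq. lia.
  - apply in_map. auto.
Qed.

Lemma all_check : forallb check (allLists 5) = true.
Proof. vm_compute. reflexivity. Qed.

Theorem lemma5p3 : E 5 2.
Proof.
  intros l Hlen Hd. apply check_ok.
  pose proof (allLists_in l Hd) as Hin. rewrite Hlen in Hin.
  pose proof all_check as Hc. rewrite forallb_forall in Hc. auto.
Qed.
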